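(* Let $T_1$ and $T_2$ be countable IILU-theories in the same predicate language $\Sigma$, and suppose that the restriction $T'_1$ of $T_1$ to the symbols that are non-empty for $T_1$ is language similar to the restriction $T'_2$ of $T_2$ to the symbols that are non-empty for $T_2$. Then $T_1$ and $T_2$ are language similar.
   Context: Theories are complete theories in predicate (relational) languages. A predicate symbol $R$ is non-empty for $T$ if $T\vdash\exists\bar x R(\bar x)$, and empty otherwise. A theory $T$ in a predicate language $\Sigma$ is language uniform (an LU-theory) if for each arity $n$, every permutation of the set of $n$-ary symbols that are non-empty for $T$ preserves $T$ (i.e., replacing each such symbol by its image maps $T$ onto $T$). An LU-theory $T$ is an IILU-theory if it has non-empty predicates and, whenever there is a non-empty $n$-ary predicate, there are infinitely many non-empty $n$-ary predicates and infinitely many empty $n$-ary predicates. A theory is countable if its language is countable. Theories $T_0,T_1$ in languages $\Sigma_0,\Sigma_1$ are language similar if $T_0$ can be obtained from $T_1$ by a bijective (arity-preserving) replacement of the symbols of $\Sigma_1$ by the symbols of $\Sigma_0$. *)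

(* Defs.v *)
From mathcomp Require Import all_boot.
Set Implicit Arguments. Unset Strict Implicit. Unset Printing Implicit Defensive.

Record signature := Signature { sym : Type; ar : sym -> nat }.

Inductive formula (L : signature) : Type :=
| FEq : nat -> nat -> formula L
| FRel : forall s : sym L, (ar s).-tuple nat -> formula L
| FNot : formula L -> formula L
| FAnd : formula L -> formula L -> formula L
| FEx : nat -> formula L -> formula L.

Arguments FEq {L}. Arguments FRel {L}. Arguments FNot {L}.
Arguments FAnd {L}. Arguments FEx {L}.

Fixpoint free (L : signature) (phi : formula L) (k : nat) : bool :=
  match phi with
  | FEq i j => (k == i) || (k == j)
  | FRel _ v => k \in (v : seq nat)
  | FNot p => free p k
  | FAnd p q => free p k || free q k
  | FEx i p => (k != i) && free p k
  end.

Definition sentence (L : signature) (phi : formula L) : Prop :=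
  forall k, free phi k = false.

Record structure (L : signature) := Structure {
  dom : Type;
  dom_inhabited : inhabited dom;
  interp : forall s : sym L, (ar s).-tuple dom -> Prop }.
Arguments interp {L} s0 s _ : rename.
Arguments dom {L} s : rename.

Fixpoint sat (L : signature) (M : structure L) (e : nat -> dom M)
  (phi : formula L) : Prop :=
  match phi with
  | FEq i j => e i = e j
  | FRel s v => interp M s (map_tuple e v)
  | FNot p => ~ sat e p
  | FAnd p q => sat e p /\ sat e q
  | FEx i p => exists a : dom M, sat (fun k => if k == i then a else e k) p
  end.
Arguments sat {L} M e phi.

Definition theory (L : signature) := formula L -> Prop.

Definition is_model (L : signature) (M : structure L) (T : theory L) : Prop :=
  forall phi, T phi -> forall e, sat M e phi.

(* T |- phi (semantic consequence; equivalent by the completeness theorem). *)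
Definition entails (L : signature) (T : theory L) (phi : formula L) : Prop :=
  forall M : structure L, is_model M T -> forall e, sat M e phi.

Definition complete_theory (L : signature) (T : theory L) : Prop :=
  (forall phi, T phi -> sentence phi) /\
  (exists M : structure L, is_model M T) /\
  (forall phi, sentence phi -> entails T phi \/ entails T (FNot phi)).

Definition countable_sig (L : signature) : Prop :=
  exists f : sym L -> nat, injective f.

Fixpoint rename (L1 L2 : signature) (f : sym L1 -> sym L2)
  (Hf : forall s, ar (f s) = ar s) (phi : formula L1) : formula L2 :=
  match phi with
  | FEq i j => FEq i j
  | FRel s v => FRel (f s) (tcast (esym (Hf s)) v)
  | FNot p => FNot (rename Hf p)
  | FAnd p q => FAnd (rename Hf p) (rename Hf q)
  | FEx i p => FEx i (rename Hf p)
  end.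

Fixpoint exs (L : signature) (n : nat) (phi : formula L) : formula L :=
  match n with
  | 0 => phi
  | k.+1 => FEx k (exs k phi)
  end.

Definition ex_rel (L : signature) (s : sym L) : formula L :=
  exs (ar s) (FRel s [tuple (i : nat) | i < ar s]).

Definition nonempty_pred (L : signature) (T : theory L) (s : sym L) : Prop :=
  entails T (ex_rel s).

(* Language similarity: T0 (over L0) is obtained from T1 (over L1) by a
   bijective arity-preserving replacement of symbols of L1 by those of L0,
   i.e. the renaming maps the set of consequences of T1 onto that of T0. *)
Definition lang_similar (L0 L1 : signature) (T0 : theory L0) (T1 : theory L1)
  : Prop :=
  exists (f : sym L1 -> sym L0) (Hf : forall s, ar (f s) = ar s),
    bijective f /\
    forall phi : formula L1, sentence phi ->
      (entails T1 phi <-> entails T0 (rename Hf phi)).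

(* Language uniformity: every permutation of the set of non-empty n-ary
   symbols (extended by the identity elsewhere) preserves T. *)
Definition LU (L : signature) (T : theory L) : Prop :=
  forall (n : nat) (f : sym L -> sym L) (Hf : forall s, ar (f s) = ar s),
    bijective f ->
    (forall s, nonempty_pred T s /\ ar s = n ->
               nonempty_pred T (f s) /\ ar (f s) = n) ->
    (forall s, ~ (nonempty_pred T s /\ ar s = n) -> f s = s) ->
    forall phi, sentence phi -> (entails T phi <-> entails T (rename Hf phi)).

Definition infinite_pred (A : Type) (P : A -> Prop) : Prop :=
  exists g : nat -> A, injective g /\ forall k, P (g k).

Definition IILU (L : signature) (T : theory L) : Prop :=
  LU T /\
  (exists s, nonempty_pred T s) /\
  (forall n, (exists s, nonempty_pred T s /\ ar s = n) ->
     infinite_pred (fun s => nonempty_pred T s /\ ar s = n) /\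
     infinite_pred (fun s => ~ nonempty_pred T s /\ ar s = n)).

Definition sub_sig (L : signature) (P : sym L -> Prop) : signature :=
  {| sym := {s : sym L | P s}; ar := fun s => ar (proj1_sig s) |}.

Definition restrict (L : signature) (T : theory L) (P : sym L -> Prop)
  : theory (sub_sig P) :=
  fun psi => sentence psi /\
    entails T (@rename (sub_sig P) L (fun s : sym (sub_sig P) => proj1_sig s)
                 (fun s => erefl) psi).
Arguments restrict {L} T P _.

(* Main.v *)
Require Import Defs.
From mathcomp Require Import all_boot.
From Stdlib Require Import Classical ClassicalEpsilon FunctionalExtensionality.
Set Implicit Arguments. Unset Strict Implicit.

Definition pull (L1 L2 : signature) (f : sym L1 -> sym L2)
  (Hf : forall s, ar (f s) = ar s) (M : structure L2) : structure L1 :=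
  @Structure L1 (dom M) (dom_inhabited M)
    (fun s v => interp M (f s) (tcast (esym (Hf s)) v)).

Lemma interp_eq (L : signature) (M : structure L) (a b : sym L)
  (u : (ar a).-tuple (dom M)) (w : (ar b).-tuple (dom M)) :
  a = b -> val u = val w -> (interp M a u <-> interp M b w).
Proof.
move=> ab; subst b => uw.
by have -> : u = w by apply: val_inj.
Qed.

Lemma sat_rename (L1 L2 : signature) (f : sym L1 -> sym L2)
  (Hf : forall s, ar (f s) = ar s) (M : structure L2) phi e :
  sat M e (rename Hf phi) <-> sat (pull Hf M) e phi.
Proof.
elim: phi e => [i j|s v|p IH|p IHp q IHq|i p IH] e /=.
- by [].
- apply: interp_eq => //.
  by rewrite /= !val_tcast /=.
- by rewrite IH.
- by rewrite IHp IHq.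
- split; move=> [a Ha]; exists a; by apply/IH.
Qed.

Lemma free_rename (L1 L2 : signature) (f : sym L1 -> sym L2)
  (Hf : forall s, ar (f s) = ar s) phi k :
  free (rename Hf phi) k = free phi k.
Proof.
elim: phi => [i j|s v|p IH|p IHp q IHq|i p IH] //=.
- by rewrite val_tcast.
- by rewrite IHp IHq.
- by rewrite IH.
Qed.

Lemma sentence_rename (L1 L2 : signature) (f : sym L1 -> sym L2)
  (Hf : forall s, ar (f s) = ar s) phi :
  sentence phi -> sentence (rename Hf phi).
Proof. by move=> H k; rewrite free_rename. Qed.

Definition ffalse (L : signature) : formula L := FEx 0 (FNot (FEq 0 0)).

Fixpoint tr (L : signature) (P : sym L -> Prop) (phi : formula L)
  : formula (sub_sig P) :=
  match phi with
  | FEq i j => FEq i j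
  | FRel s v => match excluded_middle_informative (P s) with
                | left p => @FRel (sub_sig P) (exist P s p) v
                | right _ => ffalse _
                end
  | FNot p => FNot (tr P p)
  | FAnd p q => FAnd (tr P p) (tr P q)
  | FEx i p => FEx i (tr P p)
  end.

Lemma free_tr (L : signature) (P : sym L -> Prop) phi k :
  free (tr P phi) k -> free phi k.
Proof.
elim: phi => [i j|s v|p IH|p IHp q IHq|i p IH] /=.
- by [].
- destruct (excluded_middle_informative (P s)) => //=.
  by move=> /andP[/negbTE H]; rewrite H.
- exact: IH.
- by move=> /orP[/IHp ->|/IHq ->] //; rewrite orbT.
- by move=> /andP[-> /IH].
Qed.

Lemma sentence_tr (L : signature) (P : sym L -> Prop) phi :
  sentence phi -> sentence (tr P phi).
Proof.
move=> H k; apply/negP => /free_tr; by rewrite H.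
Qed.

Lemma sat_tr (L : signature) (P : sym L -> Prop) (K : structure L)
  (I' : forall s : sym (sub_sig P), (ar s).-tuple (dom K) -> Prop) :
  (forall s (p : P s) v, interp K s v <-> I' (exist P s p) v) ->
  (forall s, ~ P s -> forall v, ~ interp K s v) ->
  forall phi e, sat K e phi <->
     sat (@Structure (sub_sig P) (dom K) (dom_inhabited K) I') e (tr P phi).
Proof.
move=> H1 H2.
elim=> [i j|s v|p IH|p IHp q IHq|i p IH] e /=.
- by [].
- destruct (excluded_middle_informative (P s)) as [p|np] => /=.
  + exact: H1.
  + split; first by move/H2.
    move=> [a /= H]; exfalso; apply: H; done.
- by rewrite IH.
- by rewrite IHp IHq.
- split; move=> [a Ha]; exists a; by apply/IH.
Qed.

Lemma sat_ext (L : signature) (M : structure L) phi e e' :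
  (forall k, e k = e' k) -> sat M e phi -> sat M e' phi.
Proof.
move=> H; have -> // : e = e'. by apply: functional_extensionality.
Qed.

Lemma sat_exs (L : signature) (M : structure L) phi n : forall e e',
  (forall k, n <= k -> e' k = e k) -> sat M e' phi -> sat M e (exs n phi).
Proof.
elim: n => [|n IHn] e e' H Hs /=.
- by apply: sat_ext Hs => k; rewrite H.
- exists (e' n); apply: (IHn _ e') => // k Hk.
  case: eqP => [->//|/eqP nk]; apply: H.
  by rewrite ltn_neqAle eq_sym nk.
Qed.

Lemma free_exs (L : signature) (phi : formula L) n k :
  free (exs n phi) k -> (n <= k) && free phi k.
Proof.
elim: n => [|n IHn] //= /andP[kn /IHn /andP[nk ->]].
by rewrite andbT ltn_neqAle eq_sym kn.
Qed.

Lemma mem_mk n k : k \in [tuple (i : nat) | i < n] -> k < n.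
Proof.
move=> /tnthP [i]; rewrite tnth_mktuple => ->; exact: ltn_ord.
Qed.

Lemma sentence_ex_rel (L : signature) (s : sym L) : sentence (ex_rel s).
Proof.
move=> k; apply/negP => /free_exs /andP[Hk H].
by move: (mem_mk H); rewrite ltnNge Hk.
Qed.

Lemma sat_ex_rel (L : signature) (M : structure L) (s : sym L) v e :
  interp M s v -> sat M e (ex_rel s).
Proof.
move=> Hv; rewrite /ex_rel.
apply: (sat_exs (e' := fun k => if k < ar s then nth (e 0) v k else e k)).
- by move=> k; rewrite ltnNge => ->.
- rewrite /=; suff -> : map_tuple (fun k => if k < ar s then nth (e 0) v k else e k)
     [tuple (i : nat) | i < ar s] = v by [].
  apply: eq_from_tnth => i; rewrite tnth_map tnth_mktuple ltn_ord.
  by rewrite (tnth_nth (e 0)).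
Qed.

Lemma empty_pred (L : signature) (T : theory L) (M : structure L) s v :
  complete_theory T -> is_model M T -> ~ nonempty_pred T s -> ~ interp M s v.
Proof.
move=> [_ [_ C]] HM ne Hv.
case: (C _ (sentence_ex_rel s)) => [//|H].
case: (dom_inhabited M) => a.
by apply: (H M HM (fun _ => a)); apply: sat_ex_rel Hv.
Qed.

Lemma restrict_entails (L : signature) (T : theory L) (P : sym L -> Prop) psi :
  complete_theory T -> sentence psi ->
  (entails T (@rename (sub_sig P) L (fun s : sym (sub_sig P) => proj1_sig s)
                 (fun s => erefl) psi) <-> entails (restrict T P) psi).
Proof.
move=> CT Hs; split.
- move=> H M HM e; apply: HM; by split.
- move=> H; have [_ [[M HM] C]] := CT.
  case: (C _ (@sentence_rename (sub_sig P) L (fun s => proj1_sig s) (fun s => erefl) psi Hs)) => [//|Hn].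
  exfalso.
  have HN : is_model (@pull (sub_sig P) L (fun s => proj1_sig s) (fun s => erefl) M) (restrict T P).
    move=> phi [_ Hphi] e; apply/sat_rename; exact: Hphi.
  have HnR : restrict T P (FNot psi).
    split; first by move=> k; apply: Hs.
    exact: Hn.
  case: (dom_inhabited M) => a.
  exact: (HN _ HnR (fun _ => a) (H _ HN _)).
Qed.

Definition bijon (X : Type) (A B : X -> Prop) (f : X -> X) : Prop :=
  (forall x, A x -> B (f x)) /\
  (forall x y, A x -> A y -> f x = f y -> x = y) /\
  (forall y, B y -> exists x, A x /\ f x = y).

Lemma unbounded (g : nat -> nat) : injective g -> forall m, exists k, m <= g k.
Proof.
move=> ig m; apply: NNPP => H.
have Hlt : forall k, g k < m.
  move=> k; rewrite ltnNge; apply/negP => Hk; apply: H; by exists k.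
have U : uniq (map g (iota 0 m.+1)) by rewrite map_inj_uniq // iota_uniq.
have Sub : {subset map g (iota 0 m.+1) <= iota 0 m}.
  by move=> x /mapP [k _ ->]; rewrite mem_iota add0n Hlt.
by have := uniq_leq_size U Sub; rewrite size_map !size_iota ltnn.
Qed.

Definition sb (S : nat -> Prop) k : bool :=
  if excluded_middle_informative (S k) then true else false.

Lemma sbP (S : nat -> Prop) k : sb S k <-> S k.
Proof. by rewrite /sb; case: excluded_middle_informative. Qed.

Lemma enum_nat (S : nat -> Prop) :
  (forall m, exists k, m <= k /\ S k) ->
  exists en : nat -> nat, (forall k, S (en k)) /\ (forall j k, j < k -> en j < en k)
     /\ (forall m, S m -> exists k, en k = m).
Proof.
move=> HS.
have Hex : forall m, exists k, (m <= k) && sb S k.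
  move=> m; have [k [H1 H2]] := HS m; exists k; rewrite H1 /=; exact/sbP.
pose next m := ex_minn (Hex m).
have nextP : forall m, m <= next m /\ S (next m) /\ forall k, m <= k -> S k -> next m <= k.
  move=> m; rewrite /next; case: ex_minnP => n /andP[H1 /sbP H2] H3.
  split=> //; split=> // k Hk Sk; apply: H3; rewrite Hk; exact/sbP.
pose en := fix en k := if k is k'.+1 then next (en k').+1 else next 0.
have enS : forall k, en k < en k.+1.
  by move=> k /=; have [H _] := nextP (en k).+1.
have enI : forall j k, j < k -> en j < en k :=
  @homo_ltn _ en (fun a b => a < b) (fun y x z => @ltn_trans y x z) enS.
exists en; split; first by case=> [|k] /=; [case: (nextP 0) => _ []|case: (nextP (en k).+1) => _ []].
split=> // m Sm.
have geK : forall k, k <= en k.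
  elim=> [//|k IH]; exact: leq_ltn_trans IH (enS k).
have key : forall k m, S m -> m <= en k -> exists j, en j = m.
  elim=> [|k IH] m' Sm' Hm'.
  - exists 0; apply/eqP; rewrite eqn_leq Hm' andbT.
    by case: (nextP 0) => _ [_ H]; apply: H.
  - case: (leqP m' (en k)) => Hk; first exact: IH.
    exists k.+1; apply/eqP; rewrite eqn_leq Hm' andbT.
    by case: (nextP (en k).+1) => _ [_ H]; apply: H.
exact: (key m m Sm (geK m)).
Qed.

Lemma enum_set (X : Type) (c : X -> nat) (A : X -> Prop) :
  injective c -> infinite_pred A ->
  exists e : nat -> X, injective e /\ (forall k, A (e k)) /\
     (forall x, A x -> exists k, e k = x).
Proof.
move=> ic [i [ii Ai]].
pose S m := exists x, A x /\ c x = m.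
have HS : forall m, exists k, m <= k /\ S k.
  move=> m; have [k Hk] := @unbounded (fun k => c (i k)) (fun a b h => ii _ _ (ic _ _ h)) m.
  exists (c (i k)); split=> //; by exists (i k).
have [en [enS [enI enSurj]]] := enum_nat HS.
pose e k := proj1_sig (constructive_indefinite_description _ (enS k)).
have eP : forall k, A (e k) /\ c (e k) = en k.
  move=> k; rewrite /e; case: constructive_indefinite_description => x Hx //.
exists e; split; last split.
- move=> j k /(congr1 c); rewrite (proj2 (eP j)) (proj2 (eP k)) => H.
  case: (ltngtP j k) => // /enI; by rewrite H ltnn.
- by move=> k; case: (eP k).
- move=> x Ax; have [k Hk] := enSurj (c x) (ex_intro _ x (conj Ax erefl)).
  exists k; apply: ic; by rewrite (proj2 (eP k)).
Qed.

Lemma count_bij (X : Type) (c : X -> nat) (A B : X -> Prop) :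
  injective c -> infinite_pred A -> infinite_pred B ->
  exists f, bijon A B f.
Proof.
move=> ic iA iB.
have [eA [eAi [eAA eAs]]] := enum_set ic iA.
have [eB [eBi [eBB eBs]]] := enum_set ic iB.
have Hk : forall x, exists k, A x -> eA k = x.
  move=> x; case: (classic (A x)) => [Ax|nAx].
  - by have [k Hk] := eAs x Ax; exists k.
  - by exists 0.
pose kA x := proj1_sig (constructive_indefinite_description _ (Hk x)).
have kAP : forall x, A x -> eA (kA x) = x.
  by move=> x; rewrite /kA; case: constructive_indefinite_description.
exists (fun x => eB (kA x)); split; last split.
- by move=> x _; apply: eBB.
- move=> x y Ax Ay /eBi H; by rewrite -(kAP x Ax) -(kAP y Ay) H.
- move=> y By; have [k <-] := eBs y By.
  exists (eA k); split; first exact: eAA.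
  congr eB; apply: eAi; exact: kAP (eAA k).
Qed.

From Stdlib Require Import ProofIrrelevance.

Lemma sig_eq (A : Type) (P : A -> Prop) (a b : sig P) :
  proj1_sig a = proj1_sig b -> a = b.
Proof.
case: a b => [x px] [y py] /= xy; subst y; congr exist; apply: proof_irrelevance.
Qed.

Theorem corollary4p3 (L : signature) (T1 T2 : theory L) :
  countable_sig L ->
  complete_theory T1 -> complete_theory T2 ->
  IILU T1 -> IILU T2 ->
  lang_similar (restrict T1 (nonempty_pred T1))
               (restrict T2 (nonempty_pred T2)) ->
  lang_similar T1 T2.
Proof.
move=> [c ic] C1 C2 [_ [_ I1]] [_ [_ I2]] [g [Hg [[g' gK g'K] Hsim]]].
set ne1 := nonempty_pred T1 in g g' Hg gK g'K Hsim I1 *.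
set ne2 := nonempty_pred T2 in g g' Hg gK g'K Hsim I2 *.
have Hh : forall n, exists h, bijon (fun s => ~ ne2 s /\ ar s = n)
                                  (fun s => ~ ne1 s /\ ar s = n) h.
  move=> n; case: (classic (exists s, ne2 s /\ ar s = n)) => [[s [p a]]|N].
  - have [_ i2] := I2 n (ex_intro _ s (conj p a)).
    have ne1n : exists t, ne1 t /\ ar t = n.
      exists (proj1_sig (g (exist _ s p))); split; first exact: proj2_sig.
      move: (Hg (exist _ s p)) => /= ->; exact: a.
    have [_ i1] := I1 n ne1n.
    exact: count_bij ic i2 i1.
  - have N1 : forall t, ar t = n -> ~ ne1 t.
      move=> t at1 p1; apply: N.
      exists (proj1_sig (g' (exist _ t p1))); split; first exact: proj2_sig.
      have := Hg (g' (exist _ t p1)); rewrite g'K /= => H.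
      by rewrite -H.
    exists id; split; last split.
    + by move=> x [_ ax]; split=> //; apply: N1.
    + by [].
    + move=> y [_ ay]; exists y; split=> //; split=> // p2; apply: N.
      by exists y.
pose hn n := proj1_sig (constructive_indefinite_description _ (Hh n)).
have hnP : forall n, bijon (fun s => ~ ne2 s /\ ar s = n)
                           (fun s => ~ ne1 s /\ ar s = n) (hn n).
  by move=> n; rewrite /hn; case: constructive_indefinite_description.
pose h s := hn (ar s) s.
have hB : forall s, ~ ne2 s -> ~ ne1 (h s) /\ ar (h s) = ar s.
  by move=> s ns; case: (hnP (ar s)) => H _; apply: H.
have hI : forall x y, ~ ne2 x -> ~ ne2 y -> h x = h y -> x = y.
  move=> x y nx ny Hxy.
  have e : ar x = ar y by rewrite -(hB x nx).2 -(hB y ny).2 Hxy.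
  case: (hnP (ar x)) => _ [Hi _]; apply: Hi => //.
  move: Hxy; by rewrite /h -e.
have hS : forall t, ~ ne1 t -> exists s, ~ ne2 s /\ h s = t.
  move=> t nt; case: (hnP (ar t)) => _ [_ Hs].
  have [x [[nx ax] hx]] := Hs t (conj nt erefl).
  by exists x; split=> //; rewrite /h ax.
pose f s := match excluded_middle_informative (ne2 s) with
            | left p => proj1_sig (g (exist _ s p))
            | right _ => h s end.
have fP : forall s (p : ne2 s), f s = proj1_sig (g (exist _ s p)).
  move=> s p; rewrite /f; case: excluded_middle_informative => [p'|//].
  by rewrite (proof_irrelevance _ p p').
have fN : forall s, ~ ne2 s -> f s = h s.
  by move=> s np; rewrite /f; case: excluded_middle_informative.
have Hf : forall s, ar (f s) = ar s.
  move=> s; case: (classic (ne2 s)) => [p|np].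
  - by rewrite (fP s p); exact: (Hg (exist _ s p)).
  - by rewrite fN // (hB s np).2.
have finj : injective f.
  move=> x y; case: (classic (ne2 x)) => [px|nx]; case: (classic (ne2 y)) => [py|ny].
  - rewrite (fP x px) (fP y py) => /sig_eq /(can_inj gK) H.
    by have := congr1 (@proj1_sig _ _) H.
  - rewrite (fP x px) (fN y ny) => H; exfalso; apply: (hB y ny).1.
    rewrite -H; exact: proj2_sig.
  - rewrite (fP y py) (fN x nx) => H; exfalso; apply: (hB x nx).1.
    rewrite H; exact: proj2_sig.
  - rewrite (fN x nx) (fN y ny); exact: hI.
have fsurj : forall t, exists s, f s = t.
  move=> t; case: (classic (ne1 t)) => [p|np].
  - exists (proj1_sig (g' (exist _ t p))).
    rewrite (fP _ (proj2_sig (g' (exist _ t p)))).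
    have -> : exist _ (proj1_sig (g' (exist _ t p))) (proj2_sig (g' (exist _ t p)))
              = g' (exist _ t p) by apply: sig_eq.
    by rewrite g'K.
  - have [s [ns hs]] := hS t np; exists s; by rewrite fN.
pose finv t := proj1_sig (constructive_indefinite_description _ (fsurj t)).
have finvK : cancel finv f.
  by move=> t; rewrite /finv; case: constructive_indefinite_description.
exists f, Hf; split.
  exists finv => // x; apply: finj; by rewrite finvK.
move=> phi Hphi.
pose psi := tr ne2 phi.
have Spsi : sentence psi by apply: sentence_tr.
have S1 : entails T2 phi <->
   entails T2 (@rename (sub_sig ne2) L (fun s => proj1_sig s) (fun s => erefl) psi).
  have E : forall M, is_model M T2 -> forall e, sat M e phi <->
     sat M e (@rename (sub_sig ne2) L (fun s => proj1_sig s) (fun s => erefl) psi).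
    move=> M HM e; rewrite sat_rename.
    apply: (@sat_tr L ne2 M (fun s v => interp M (proj1_sig s) (tcast (esym erefl) v))).
    + move=> s p v /=; apply: interp_eq => //; by rewrite val_tcast.
    + move=> s ns v; exact: empty_pred C2 HM ns.
  by split=> H M HM e; apply/(E M HM); apply: H.
have S2 := @restrict_entails L T2 ne2 psi C2 Spsi.
have S3 := Hsim psi Spsi.
have S4 := @restrict_entails L T1 ne1 (rename Hg psi) C1 (sentence_rename Hg Spsi).
have S5 : entails T1 (@rename (sub_sig ne1) L (fun s => proj1_sig s) (fun s => erefl)
                         (rename Hg psi)) <-> entails T1 (rename Hf phi).
  have E : forall M, is_model M T1 -> forall e, sat M e (rename Hf phi) <->
     sat M e (@rename (sub_sig ne1) L (fun s => proj1_sig s) (fun s => erefl)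
                (rename Hg psi)).
    move=> M HM e; rewrite sat_rename sat_rename sat_rename.
    apply: (@sat_tr L ne2 (pull Hf M)
       (fun s v => interp (pull Hg (@pull (sub_sig ne1) L (fun s => proj1_sig s)
                       (fun s => erefl) M)) s v)).
    + move=> s p v /=; apply: interp_eq; first exact: fP.
      exact: etrans (val_tcast _ _) (esym (val_tcast _ _)).
    + move=> s ns v /=; apply: (empty_pred C1 HM).
      rewrite fN //; exact: (hB s ns).1.
  by split=> H M HM e; apply/(E M HM); apply: H.
rewrite S1 S2 S3 -S4 S5; by [].
Qed.
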